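(* Let $(\mathcal T,d)$ be a finite metric space with $d^\star=\max_{s,t\in\mathcal T}d(s,t)$, let $\ell:\mathbb R_+\to\mathbb R_+$ be non-decreasing, $L(s,t)=\ell(d(s,t))$, $f:\mathcal X^n\to\mathcal T$, $\varepsilon>0$, and $T\ge1$ an integer. Then for every $x\in\mathcal X^n$, the discrete inverse sensitivity mechanism $M_{\mathrm{disc}}$ with parameter $\varepsilon$ satisfies $$\mathbb E[L(M_{\mathrm{disc}}(x),f(x))]\le\ell(\omega_f(x;T))+\frac{2\ell(d^\star)|\mathcal T|}{\varepsilon}e^{-T\varepsilon/2}.$$
   Context: $d_H$ is the Hamming distance on $\mathcal X^n$. The inverse sensitivity is $\mathrm{len}_f(x;t)=\inf\{d_H(x,x'):f(x')=t\}$ ($\inf\emptyset=+\infty$, $e^{-\infty}=0$). The discrete inverse sensitivity mechanism with parameter $\varepsilon$ outputs $t\in\mathcal T$ with probability $e^{-\mathrm{len}_f(x;t)\varepsilon/2}\big/\sum_{s\in\mathcal T}e^{-\mathrm{len}_f(x;s)\varepsilon/2}$. The local modulus of continuity is $\omega_f(x;k)=\sup\{d(f(x),f(x')):x'\in\mathcal X^n,\ d_H(x,x')\le k\}$. *)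

(* Defs.v *)
From HB Require Import structures.
From mathcomp Require Import all_boot all_order all_algebra.
From mathcomp Require Import boolp classical_sets reals.
From mathcomp.analysis Require Import sequences exp.
Set Implicit Arguments. Unset Strict Implicit. Unset Printing Implicit Defensive.
Import Order.TTheory GRing.Theory Num.Theory.
Local Open Scope ring_scope.

Definition hamming (X : eqType) (n : nat) (x y : n.-tuple X) : nat :=
  #|[set i : 'I_n | tnth x i != tnth y i]|.

Definition len_pred (X : eqType) (n : nat) (Tc : Type) (f : n.-tuple X -> Tc)
  (x : n.-tuple X) (t : Tc) : pred nat :=
  fun k => `[< exists x', f x' = t /\ hamming x x' = k >].

(* Inverse sensitivity len_f(x;t): Some (min distance), or None (= +oo) when
   t is not in the range of f. *)
Definition inv_sens (X : eqType) (n : nat) (Tc : Type) (f : n.-tuple X -> Tc)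
  (x : n.-tuple X) (t : Tc) : option nat :=
  match pselect (exists k, len_pred f x t k) with
  | left H => Some (ex_minn H)
  | right _ => None
  end.

(* Unnormalized weight exp(-len_f(x;t) eps / 2), with exp(-oo) = 0. *)
Definition disc_weight (R : realType) (X : eqType) (n : nat) (Tc : Type)
  (f : n.-tuple X -> Tc) (eps : R) (x : n.-tuple X) (t : Tc) : R :=
  match inv_sens f x t with
  | Some k => expR (- (k%:R * eps / 2))
  | None => 0
  end.

Definition disc_prob (R : realType) (X : eqType) (n : nat) (Tc : finType)
  (f : n.-tuple X -> Tc) (eps : R) (x : n.-tuple X) (t : Tc) : R :=
  disc_weight f eps x t / \sum_(s : Tc) disc_weight f eps x s.

Definition loc_mod (R : realType) (X : eqType) (n : nat) (Tc : Type)
  (d : Tc -> Tc -> R) (f : n.-tuple X -> Tc) (x : n.-tuple X) (k : nat) : R :=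
  sup [set d (f x) (f x') | x' in [set x' | (hamming x x' <= k)%N]].

Definition diam (R : realType) (Tc : finType) (d : Tc -> Tc -> R) : R :=
  \big[Num.max/0]_(s : Tc) \big[Num.max/0]_(t : Tc) d s t.

Definition is_metric (R : realType) (Tc : Type) (d : Tc -> Tc -> R) : Prop :=
  (forall s t, 0 <= d s t) /\ (forall s t, d s t = 0 <-> s = t) /\
  (forall s t, d s t = d t s) /\ (forall s t u, d s u <= d s t + d t u).

(* Main.v *)
Require Import Defs.
From HB Require Import structures.
From mathcomp Require Import all_boot all_order all_algebra.
From mathcomp Require Import boolp classical_sets reals.
From mathcomp.analysis Require Import sequences exp.
From mathcomp Require Import ring.
Import Order.TTheory GRing.Theory Num.Theory.
Local Open Scope ring_scope.
Set Implicit Arguments. Unset Strict Implicit.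

Lemma le_bigmax_seq (R : realType) (I : eqType) (F : I -> R) (s : seq I) i :
  i \in s -> F i <= \big[Num.max/0]_(j <- s) F j.
Proof.
elim: s => [//|a s IH]; rewrite inE big_cons => /orP[/eqP->|/IH h].
  by rewrite le_max lexx.
by rewrite le_max h orbT.
Qed.

Lemma diam_ge (R : realType) (Tc : finType) (d : Tc -> Tc -> R) s t :
  d s t <= diam d.
Proof.
rewrite /diam.
have h1 := @le_bigmax_seq R Tc (d s) (index_enum Tc) t (mem_index_enum t).
have h2 := @le_bigmax_seq R Tc (fun s => \big[Num.max/0]_(t : Tc) d s t)
  (index_enum Tc) s (mem_index_enum s).
exact: le_trans h1 h2.
Qed.

Lemma inv_sens_SomeP (X : eqType) (n : nat) (Tc : Type) (f : n.-tuple X -> Tc)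
  x t k : inv_sens f x t = Some k -> exists x', f x' = t /\ hamming x x' = k.
Proof.
rewrite /inv_sens; case: pselect => // H [<-].
case: ex_minnP => m /asboolP ? _; done.
Qed.

Lemma hamming_self (X : eqType) (n : nat) (x : n.-tuple X) : hamming x x = 0%N.
Proof.
by rewrite /hamming; apply/eqP; rewrite cards_eq0; apply/eqP/setP => i;
  rewrite !inE eqxx.
Qed.

Lemma inv_sens_self (X : eqType) (n : nat) (Tc : Type) (f : n.-tuple X -> Tc)
  x : inv_sens f x (f x) = Some 0%N.
Proof.
rewrite /inv_sens; case: pselect => [H|H]; last first.
  exfalso; apply: H; exists 0%N; apply/asboolP; exists x; split => //.
  by rewrite /hamming; apply/eqP; rewrite cards_eq0; apply/eqP/setP => i;
    rewrite !inE eqxx.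
congr Some; case: ex_minnP => m _ /(_ 0%N) h; apply/eqP; rewrite -leqn0; apply: h.
apply/asboolP; exists x; split => //.
by rewrite /hamming; apply/eqP; rewrite cards_eq0; apply/eqP/setP => i;
  rewrite !inE eqxx.
Qed.

Lemma weight_ge0 (R : realType) (X : eqType) (n : nat) (Tc : Type)
  (f : n.-tuple X -> Tc) (eps : R) x t : 0 <= disc_weight f eps x t.
Proof. by rewrite /disc_weight; case: inv_sens => // k; exact: expR_ge0. Qed.

Unset Implicit Arguments. Set Strict Implicit.

Theorem lemmaB1 (R : realType) (Tc : finType) (d : Tc -> Tc -> R)
  (ell : R -> R) (X : eqType) (n : nat) (f : n.-tuple X -> Tc) (eps : R)
  (T : nat) :
  is_metric d ->
  (forall r, 0 <= r -> 0 <= ell r) ->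
  (forall a b, 0 <= a -> a <= b -> ell a <= ell b) ->
  0 < eps -> (1 <= T)%N ->
  forall x : n.-tuple X,
    \sum_(t : Tc) disc_prob f eps x t * ell (d t (f x))
    <= ell (loc_mod d f x T)
       + 2 * ell (diam d) * #|Tc|%:R / eps * expR (- (T%:R * eps / 2)).
Proof.
move=> [d0 [deq [dsym _]]] ell0 ellm eps0 T1 x.
set W := \sum_(s : Tc) disc_weight f eps x s.
have W1 : 1 <= W.
  rewrite /W (bigD1 (f x)) //= {1}/disc_weight inv_sens_self.
  rewrite !mul0r oppr0 expR0.
  by rewrite lerDl sumr_ge0 // => *; exact: weight_ge0.
have W0 : 0 < W by apply: lt_le_trans W1.
pose E := ([set d (f x) (f x') | x' in [set x' : n.-tuple X | (hamming x x' <= T)%N]])%classic.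
have ubE : has_ubound E by exists (diam d) => _ [x' _ <-]; exact: diam_ge.
have lmge : forall x', (hamming x x' <= T)%N -> d (f x) (f x') <= loc_mod d f x T.
  by move=> x' hx'; apply: (ub_le_sup ubE); exists x'.
have lm0 : 0 <= loc_mod d f x T.
  by apply: le_trans (lmge x _); [exact: d0| rewrite hamming_self].
have dm0 : 0 <= diam d by exact: (le_trans (d0 (f x) (f x)) (diam_ge d (f x) (f x))).
set c := expR (- (T.+1%:R * eps / 2)).
have c0 : 0 <= c by exact: expR_ge0.
have key : forall t, disc_prob f eps x t * ell (d t (f x)) <=
    ell (loc_mod d f x T) * disc_prob f eps x t + ell (diam d) * c.
  move=> t.
  have p0 : 0 <= disc_prob f eps x t by rewrite divr_ge0 // ?weight_ge0 ?ltW.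
  have e0 : 0 <= ell (d t (f x)) by apply: ell0.
  rewrite /disc_prob /disc_weight; case E1: inv_sens => [k|]; last first.
    by rewrite !mul0r mulr0 add0r mulr_ge0 ?ell0.
  have [kT|kT] := leqP k T.
    have [x' [fx' hx']] := inv_sens_SomeP E1.
    have : ell (d t (f x)) <= ell (loc_mod d f x T).
      apply: ellm => //; rewrite dsym -fx'; apply: lmge; rewrite hx' //.
    move=> h; rewrite mulrC; apply: ler_wpDr; first by rewrite mulr_ge0 ?ell0.
    by rewrite ler_wpM2r // ?divr_ge0 ?expR_ge0 ?ltW.
  apply: ler_wpDl; first by rewrite mulr_ge0 ?ell0 // divr_ge0 ?expR_ge0 ?ltW.
  rewrite mulrC ler_pM ?ell0 //; first by rewrite divr_ge0 ?expR_ge0 ?ltW.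
    by apply: ellm => //; exact: diam_ge.
  apply: (@le_trans _ _ (expR (- (k%:R * eps / 2)))).
    by rewrite ler_pdivrMr // ler_peMr ?expR_ge0.
  by rewrite ler_expR lerN2 ler_pM2r ?invr_gt0 ?ltr0n // ler_pM2r // ler_nat.
apply: le_trans (ler_sum _ (fun t _ => key t)) _.
rewrite big_split /= -mulr_sumr sumr_const.
have -> : \sum_(i : Tc) disc_prob f eps x i = 1.
  by rewrite /disc_prob -mulr_suml divff // gt_eqF.
rewrite mulr1 lerD2l.
set e := expR (- (T%:R * eps / 2)).
have e0 : 0 <= e by exact: expR_ge0.
have hc : c <= 2 / eps * e.
  have -> : c = expR (- (eps / 2)) * e.
    rewrite /c /e -expRD; congr expR; rewrite -[T.+1]addn1 natrD; ring.
  rewrite ler_wpM2r // expRN -(invf_div eps 2) ler_pV2 ?inE ?posrE ?divr_gt0 ?expR_gt0 //.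
  - by apply: le_trans (expR_ge1Dx _); rewrite lerDr.
  - by rewrite andbT unitfE gt_eqF ?expR_gt0.
  - by rewrite andbT unitfE gt_eqF ?divr_gt0.
rewrite -[_ *+ #|_|]mulr_natr.
have -> : 2 * ell (diam d) * #|Tc|%:R / eps * e =
  (ell (diam d) * c * #|Tc|%:R) + (ell (diam d) * #|Tc|%:R) * (2 / eps * e - c) by ring.
rewrite lerDl mulr_ge0 ?subr_ge0 // mulr_ge0 ?ell0 //.
Qed.
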